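(* Let $H$ be a digraph and let $\widehat{H}\supseteq H$ be a strongly connected digraph. Then there exists $H^*\in GPC(H)$ such that $H^*\subseteq\widehat{H}$.
   Context: $D_1\cup D_2$ denotes the digraph with vertex set $V(D_1)\cup V(D_2)$ and arc set $A(D_1)\cup A(D_2)$. The path completions $PC(H)$ of $H$ are the strongly connected digraphs of the form $H^*=H\cup P_1\cup\dots\cup P_\ell$ where each $P_i$ is a directed path whose two end-points lie in $V(H)$ (the paths need not be vertex-disjoint from each other or from $H$); $\{P_1,\dots,P_\ell\}$ is a witnessing collection of paths. The good path completions $GPC(H)\subseteq PC(H)$ are those $H^*\in PC(H)$ admitting such a representation in which the ordered pairs of end-points of the paths $P_i$ are pairwise distinct (so $\ell\le|V(H)|^2$). *)

(* Defs.v *)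
From mathcomp Require Import all_boot.
Set Implicit Arguments. Unset Strict Implicit. Unset Printing Implicit Defensive.

Definition digraph (T : finType) := ({set T} * {set T * T})%type.

Section Digraphs.
Variable T : finType.

Definition V (D : digraph T) : {set T} := D.1.
Definition A (D : digraph T) : {set T * T} := D.2.

Definition wf_digraph (D : digraph T) : Prop :=
  forall a, a \in A D -> a.1 \in V D /\ a.2 \in V D.

Definition arcrel (D : digraph T) : rel T := fun x y => (x, y) \in A D.

Definition strongly_connected (D : digraph T) : Prop :=
  forall u v, u \in V D -> v \in V D -> connect (arcrel D) u v.

Definition subdigraph (D1 D2 : digraph T) : Prop :=
  V D1 \subset V D2 /\ A D1 \subset A D2.

Definition dunion (D1 D2 : digraph T) : digraph T :=
  (V D1 :|: V D2, A D1 :|: A D2).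

(* A directed path x = v0 -> v1 -> ... -> vk, encoded by its start x and the
   sequence p = [v1; ...; vk] of the remaining vertices (pairwise distinct). *)
Definition dipath := (T * seq T)%type.

Definition is_dipath (P : dipath) : bool := uniq (P.1 :: P.2).

Definition dipath_graph (P : dipath) : digraph T :=
  ([set v in P.1 :: P.2], [set e in zip (P.1 :: P.2) P.2]).

Definition dipath_ends (P : dipath) : T * T := (P.1, last P.1 P.2).

Definition completion (H : digraph T) (Ps : seq dipath) : digraph T :=
  foldr (fun P D => dunion D (dipath_graph P)) H Ps.

Definition PC (H Hs : digraph T) : Prop :=
  strongly_connected Hs /\
  exists Ps : seq dipath,
    [/\ all is_dipath Ps,
        (forall P, P \in Ps -> (dipath_ends P).1 \in V H /\ (dipath_ends P).2 \in V H)
      & Hs = completion H Ps].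

Definition GPC (H Hs : digraph T) : Prop :=
  strongly_connected Hs /\
  exists Ps : seq dipath,
    [/\ all is_dipath Ps,
        (forall P, P \in Ps -> (dipath_ends P).1 \in V H /\ (dipath_ends P).2 \in V H),
        uniq (map dipath_ends Ps)
      & Hs = completion H Ps].

End Digraphs.

(* Main.v *)
Require Import Defs.
From mathcomp Require Import all_boot.
Set Implicit Arguments. Unset Strict Implicit. Unset Printing Implicit Defensive.

Section Aux.
Variable T : finType.
Implicit Types (H : digraph T) (Ps : seq (dipath T)).

Lemma compV H Ps x : (x \in V (completion H Ps)) =
  (x \in V H) || has (fun P : dipath T => x \in P.1 :: P.2) Ps.
Proof.
elim: Ps => [|P Ps IH] /=; first by rewrite orbF.
rewrite /V /= in_setU -/(V _) IH inE /=.
by case: (x \in V H); case: has; case: (x \in P.1 :: P.2).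
Qed.

Lemma compA H Ps a : (a \in A (completion H Ps)) =
  (a \in A H) || has (fun P : dipath T => a \in zip (P.1 :: P.2) P.2) Ps.
Proof.
elim: Ps => [|P Ps IH] /=; first by rewrite orbF.
rewrite /A /= in_setU -/(A _) IH inE /=.
by case: (a \in A H); case: has; case: (a \in zip _ _).
Qed.

Lemma path_zip (e : rel T) x p : path e x p ->
  forall a, a \in zip (x :: p) p -> e a.1 a.2.
Proof.
elim: p x => [|y p IH] x //= /andP [exy pp] a.
rewrite inE => /orP [/eqP -> //|]; exact: IH.
Qed.

Lemma zip_path (e : rel T) x p :
  (forall a, a \in zip (x :: p) p -> e a.1 a.2) -> path e x p.
Proof.
elim: p x => [|y p IH] x //= Hz.
have -> : e x y := Hz (x, y) (mem_head _ _).
rewrite /=.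
apply: IH => a Ha; apply: Hz; by rewrite inE Ha orbT.
Qed.

Lemma pathV H x p : wf_digraph H -> path (arcrel H) x p -> {subset p <= V H}.
Proof.
move=> wf; elim: p x => [|y p IH] x //= /andP [exy pp] z.
rewrite inE => /orP [/eqP ->|zp]; last exact: (IH y pp z zp).
by case: (wf _ exy).
Qed.

Lemma path_conn (e : rel T) x p w : path e x p -> w \in x :: p ->
  connect e x w /\ connect e w (last x p).
Proof.
move=> pp wp; split; first exact: (path_connect pp).
move: wp; rewrite inE => /orP [/eqP ->|wp].
  by apply/connectP; exists p.
case/splitPr: wp pp => p1 p2.
rewrite cat_path last_cat /= => /andP [_ /andP [_ pp2]].
by apply/connectP; exists p2.
Qed.

Lemma exPs (e : rel T) (s : seq (T * T)) :
  (forall q, q \in s -> connect e q.1 q.2) ->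
  exists Ps : seq (dipath T),
    [/\ all (@is_dipath T) Ps, map (@dipath_ends T) Ps = s &
        forall P, P \in Ps -> path e P.1 P.2].
Proof.
elim: s => [|q s IH] Hs; first by exists [::].
have IH' : forall q', q' \in s -> connect e q'.1 q'.2.
  by move=> q' Hq'; apply: Hs; rewrite inE Hq' orbT.
have [Ps [H1 H2 H3]] := IH IH'.
have /connectP [p pp lp] := Hs q (mem_head _ _).
case: q Hs pp lp => [a b] /= Hs pp ->.
case: (shortenP pp) => p' pp' up' _.
exists ((a, p') :: Ps); split => /=.
- by rewrite H1 andbT.
- by rewrite H2.
- by move=> P; rewrite inE => /orP [/eqP -> //|]; apply: H3.
Qed.

End Aux.

Theorem lemma19 (T : finType) (H Hh : digraph T) :
  wf_digraph H -> wf_digraph Hh ->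
  subdigraph H Hh -> strongly_connected Hh ->
  exists Hs : digraph T, GPC H Hs /\ subdigraph Hs Hh.
Proof.
move=> wfH wfHh [sV sA] sc.
set s := enum [set q : T * T | (q.1 \in V H) && (q.2 \in V H)].
have [|Ps [H1 H2 H3]] := @exPs T (arcrel Hh) s.
  move=> q; rewrite mem_enum inE => /andP [q1 q2].
  by apply: sc; apply: (subsetP sV).
have ends : forall P, P \in Ps ->
    (dipath_ends P).1 \in V H /\ (dipath_ends P).2 \in V H.
  move=> P PP; have : dipath_ends P \in s by rewrite -H2 map_f.
  by rewrite mem_enum inE => /andP [].
set C := completion H Ps.
have pathC : forall P, P \in Ps -> path (arcrel C) P.1 P.2.
  move=> P PP; apply: zip_path => a Ha.
  rewrite /arcrel compA; apply/orP; right; apply/hasP; exists P => //.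
  by case: a Ha.
have reach : forall w, w \in V C -> exists a b,
    [/\ a \in V H, b \in V H, connect (arcrel C) a w & connect (arcrel C) w b].
  move=> w; rewrite compV => /orP [wH|/hasP [P PP wP]].
    by exists w, w; split.
  have [e1 e2] := ends P PP.
  have [c1 c2] := path_conn (pathC P PP) wP.
  by exists P.1, (last P.1 P.2); split.
exists C; split.
  split; last by exists Ps; split => //; rewrite H2 enum_uniq.
  move=> u v uC vC.
  have [a1 [b1 [_ bH _ c1]]] := reach u uC.
  have [a2 [b2 [aH _ c2 _]]] := reach v vC.
  have : (b1, a2) \in s by rewrite mem_enum inE /= bH aH.
  rewrite -H2 => /mapP [P PP [e1 e2]].
  have [_ c3] := path_conn (pathC P PP) (mem_head _ _).
  apply: connect_trans c1 _; apply: connect_trans c2.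
  by rewrite e1 e2.
split.
  apply/subsetP => x; rewrite compV => /orP [xH|/hasP [P PP]].
    exact: (subsetP sV).
  rewrite inE => /orP [/eqP ->|xp].
    by apply: (subsetP sV); case: (ends P PP).
  exact: (pathV wfHh (H3 P PP)).
apply/subsetP => a; rewrite compA => /orP [aH|/hasP [P PP aP]].
  exact: (subsetP sA).
by have := path_zip (H3 P PP) aP; case: a aP.
Qed.
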